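(* Let $p_n(\mathbf y)$ be a linear sequence of symmetric functions of binomial type, and let $\theta$ be a shift-invariant linear operator on $\Lambda$. Then for every $n\ge0$, $$\theta\, p_n(\mathbf y)=\sum_{k=0}^n\binom nk\big(\epsilon\,\theta\, p_k(\mathbf y)\big)\,p_{n-k}(\mathbf y).$$
   Context: $\Lambda$ is the algebra of complex symmetric functions in $\mathbf y=(y_1,y_2,\dots)$. A linear sequence of symmetric functions of binomial type is $$p_n(\mathbf y)=\sum_{\lambda\vdash n}\frac{n!}{\prod_i\lambda_i!}\Big(\prod_ia_{\lambda_i}\Big)m_\lambda(\mathbf y)$$ for complex numbers $a_0=1,a_1\ne0,a_2,\dots$, where $m_\lambda$ is the monomial symmetric function. A linear operator $\theta$ on $\Lambda$ is shift-invariant if $E^a\theta=\theta E^a$ for all $a\in\mathbb C$, where $E^ap(y_1,\dots)=p(a,y_1,\dots)$. $\epsilon p=p(0,0,\dots)$. *)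

(* Defs.v *)
From HB Require Import structures.
From mathcomp Require Import all_boot all_algebra.
From mathcomp Require Import reals complex.
From mathcomp Require Import mpoly.

Set Implicit Arguments.
Unset Strict Implicit.
Unset Printing Implicit Defensive.

Import GRing.Theory.
Local Open Scope ring_scope.

(* Model of Lambda: a symmetric function in y = (y_1, y_2, ...) is the
   compatible family (F n)_n of its restrictions to n variables
   (y_{n+1} = y_{n+2} = ... = 0), i.e. Lambda is the graded inverse limit. *)

Section SymFun.
Variable K : fieldType.

Definition SF := forall n : nat, {mpoly K[n]}.

(* variable y_(i+1) of n+1 variables, seen in n variables, or 0 if i = n *)
Definition var_or0 (n : nat) (i : nat) : {mpoly K[n]} :=
  oapp (fun j : 'I_n => 'X_j) 0 (insub i).

(* set the last variable y_{n+1} to 0 *)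
Definition restr (n : nat) (p : {mpoly K[n.+1]}) : {mpoly K[n]} :=
  comp_mpoly [tuple var_or0 n (val i) | i < n.+1] p.

Definition isSym (F : SF) : Prop :=
  [/\ forall n, F n \is symmetric,
      forall n, restr (F n.+1) = F n
    & exists d : nat, forall n, (msize (F n) <= d)%N].

Definition sf_add (F G : SF) : SF := fun n => F n + G n.
Definition sf_scale (c : K) (F : SF) : SF := fun n => c *: F n.

(* E^a p (y_1, y_2, ...) = p (a, y_1, y_2, ...) *)
Definition shift (a : K) (F : SF) : SF := fun n =>
  comp_mpoly [tuple (if val i == 0%N then a%:MP else var_or0 n (val i).-1)
             | i < n.+1] (F n.+1).

(* epsilon p = p(0, 0, ...) *)
Definition eps (F : SF) : K := mcoeff 0%MM (F 0%N).

(* monomial symmetric function m_lambda (lambda a partition, given as a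
   nonincreasing list of positive integers) *)
Definition mono (l : seq nat) : SF := fun n =>
  \sum_(al : 'X_{1..n < (sumn l).+1}
          | sort geq [seq x <- tval (multinom_val (bmnm al)) | x != 0%N] == l)
     'X_[bmnm al].

(* p_n = sum_{lambda |- n} n!/prod_i lambda_i! (prod_i a_{lambda_i}) m_lambda.
   Partitions of n are enumerated as nonincreasing n-tuples with entries
   in {0..n} summing to n (zero padding removed). *)
Definition binom_seq (a : nat -> K) (n : nat) : SF := fun m =>
  \sum_(t : n.-tuple 'I_n.+1
          | sorted geq (map val t) && (sumn (map val t) == n))
     let l := [seq x <- map val t | x != 0%N] in
     ((n`!)%:R / (\prod_(x <- l) x`!)%:R * \prod_(x <- l) a x) *: mono l m.

End SymFun.

(* Main.v *)
Require Import Defs.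
From HB Require Import structures.
From mathcomp Require Import all_boot all_algebra.
From mathcomp Require Import reals complex.
From mathcomp Require Import mpoly.
From mathcomp Require Import ring.
From mathcomp Require Import fingroup perm.
From Stdlib Require Import FunctionalExtensionality.
Import GRing.Theory Num.Theory.
Local Open Scope ring_scope.

Set Implicit Arguments.
Unset Strict Implicit.
Unset Printing Implicit Defensive.

Section Generic.
Variable K : numFieldType.

Lemma poly_allroots0 (P : {poly K}) : (forall x, P.[x] = 0) -> P = 0.
Proof.
move=> hP; apply/eqP; apply/negPn/negP => nz.
set rs := mkseq (fun i => i%:R : K) (size P).
have H1 : all (root P) rs by apply/allP => x _; apply/eqP/hP.
have H2 : uniq rs.
  rewrite map_inj_uniq ?iota_uniq // => i j /eqP; rewrite eqr_nat => /eqP //.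
by have := max_poly_roots nz H1 H2; rewrite size_mkseq ltnn.
Qed.

Lemma mnm0_eq (al : 'X_{1..0}) : al = 0%MM.
Proof. by apply/mnmP => -[]. Qed.

Lemma mpoly0_const (p : {mpoly K[0]}) : p = (p@_0%MM)%:MP.
Proof.
apply/mpolyP => al; rewrite mcoeffC (mnm0_eq al) eqxx mulr1 //.
Qed.

Definition extv m (v : 'I_m -> K) (x : K) : 'I_m.+1 -> K :=
  fun i => if insub (val i) is Some j then v j else x.

Lemma extv_widen m v x (i : 'I_m) : extv v x (widen_ord (leqnSn m) i) = v i.
Proof. by rewrite /extv /= insubT //= => h; congr v; apply/val_inj. Qed.

Lemma extv_max m v x : extv v x (@ord_max m) = x.
Proof. by rewrite /extv /= insubF // ltnn. Qed.

Lemma meval_muni m (p : {mpoly K[m.+1]}) v x :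
  p.@[extv v x] = (map_poly (meval v) (muni p)).[x].
Proof.
rewrite muniE mevalE raddf_sum horner_sum; apply/eq_bigr => al _.
rewrite [X in X.[x]]/= map_polyZ hornerZ map_polyXn hornerXn /=.
rewrite mevalZ mevalX big_ord_recr /= extv_max mulrA; congr (_ * _ * _).
by apply/eq_bigr => i _; rewrite mnmE extv_widen.
Qed.

Definition mtail m (al : 'X_{1..m.+1}) : 'X_{1..m} :=
  [multinom [tuple al (widen_ord (leqnSn m) i) | i < m]].

Lemma mnm_split m (a b : 'X_{1..m.+1}) :
  (a == b) = (mtail a == mtail b) && (a ord_max == b ord_max).
Proof.
apply/eqP/andP => [->|[/eqP h /eqP hm]]; first by split.
apply/mnmP => i; case: (unliftP ord_max i) => [j ->|->] //.
have := congr1 (fun t : 'X_{1..m} => t j) h; rewrite /mtail !mnmE.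
by have -> : lift ord_max j = widen_ord (leqnSn m) j by apply/val_inj => /=; rewrite /bump leqNgt ltn_ord.
Qed.

Lemma muni_coef m (p : {mpoly K[m.+1]}) al :
  ((muni p)`_(al ord_max))@_(mtail al) = p@_al.
Proof.
rewrite {2}(mpolyE p) muniE coef_sum !raddf_sum /=; apply/eq_bigr => b _.
rewrite coefZ coefXn mcoeffZ mcoeffX (eq_sym b) mnm_split.
case: (al ord_max == b ord_max); rewrite ?mulr1 ?mulr0 ?mcoeff0 ?andbT ?andbF //.
  by rewrite mcoeffZ mcoeffX eq_sym; reflexivity.
by rewrite mulr0.
Qed.

Lemma mpoly_eval_eq0 m (p : {mpoly K[m]}) : (forall v, p.@[v] = 0) -> p = 0.
Proof.
elim: m p => [|m IH] p hp.
  have := hp (fun _ => 0); rewrite {1}(mpoly0_const p) mevalC => h.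
  by rewrite (mpoly0_const p) h mpolyC0.
have hq : muni p = 0.
  apply/polyP => k; rewrite coef0; apply: IH => v.
  have h0 : map_poly (meval v) (muni p) = 0.
    by apply: poly_allroots0 => x; rewrite -meval_muni hp.
  by have := congr1 (fun P : {poly K} => P`_k) h0; rewrite coef_map coef0.
by apply/mpolyP => al; rewrite mcoeff0 -muni_coef hq coef0 mcoeff0.
Qed.

Lemma mpoly_eval_eq m (p q : {mpoly K[m]}) :
  (forall v, p.@[v] = q.@[v]) -> p = q.
Proof.
move=> hv; apply/eqP; rewrite -subr_eq0; apply/eqP/mpoly_eval_eq0 => v.
by rewrite mevalB hv subrr.
Qed.

End Generic.

Section GenFun.
Variable K : numFieldType.
Variable a : nat -> K.
Hypothesis ha0 : a 0%N = 1.

Definition Fp N (c : K) : {poly K} := \poly_(k < N) (a k / k`!%:R * c ^+ k).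
Definition E m n (u : nat -> K) : K :=
  n`!%:R * (\prod_(i < m) Fp n.+1 (u i))`_n.

Lemma coef_prod_eq m k (P Q : 'I_m -> {poly K}) :
  (forall i j, (j <= k)%N -> (P i)`_j = (Q i)`_j) ->
  forall j, (j <= k)%N -> (\prod_i P i)`_j = (\prod_i Q i)`_j.
Proof.
elim: m P Q => [|m IH] P Q h j hj; first by rewrite !big_ord0.
rewrite !big_ord_recr !coefM; apply: eq_bigr => l _.
have hl : (l <= k)%N by apply: leq_trans hj; rewrite -ltnS.
have hl' : (j - l <= k)%N by apply: leq_trans hj; rewrite leq_subr.
rewrite (IH (fun i => P (widen_ord (leqnSn m) i)) (fun i => Q (widen_ord (leqnSn m) i))) //.
  by rewrite h.
by move=> i j' hj'; rewrite h.
Qed.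

Lemma E_trunc m n N (u : nat -> K) : (n < N)%N ->
  n`!%:R * (\prod_(i < m) Fp N (u i))`_n = E m n u.
Proof.
move=> hn; rewrite /E; congr (_ * _); apply: (coef_prod_eq (k := n)) => // i j hj.
by rewrite !coef_poly ltnS hj (leq_ltn_trans hj hn).
Qed.

Lemma E0 n u : E 0 n u = (n == 0%N)%:R.
Proof. by rewrite /E big_ord0 coef1; case: n => //= [|n]; rewrite ?mulr1 ?mulr0. Qed.

Lemma E_ext m n u u' : (forall i, (i < m)%N -> u i = u' i) -> E m n u = E m n u'.
Proof.
move=> h; rewrite /E.
have -> : \prod_(i < m) Fp n.+1 (u i) = \prod_(i < m) Fp n.+1 (u' i) by apply: eq_bigr => i _; rewrite h.
by [].
Qed.

Lemma Fp_0 N : (0 < N)%N -> Fp N 0 = 1.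
Proof.
move=> hN; apply/polyP => k; rewrite coef_poly coef1.
case: k => [|k]; first by rewrite hN /= ha0 expr0 mulr1 divr1.
by rewrite expr0n /= mulr0; case: ifP.
Qed.

Lemma E_restr m n u w : (forall i, (i < m)%N -> w i = u i) -> w m = 0 ->
  E m.+1 n w = E m n u.
Proof.
move=> h hm; rewrite /E big_ord_recr /= hm Fp_0 // mulr1.
by under eq_bigr => i _ do rewrite h ?ltn_ord //.
Qed.

Lemma E_split m1 m2 n u : E (m1 + m2) n u =
  \sum_(j < n.+1) ('C(n, j)%:R * E m1 j u * E m2 (n - j) (fun i => u (m1 + i)%N)).
Proof.
rewrite {1}/E big_split_ord coefM mulr_sumr; apply: eq_bigr => j _.
have h1 := E_trunc m1 u (ltn_ord j).
have h2 : (n - j < n.+1)%N by rewrite ltnS leq_subr.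
have {}h2 := E_trunc m2 (fun i => u (m1 + i)%N) h2.
rewrite -h1 -h2.
rewrite -(bin_fact (ltn_ord j : (j <= n)%N)) !natrM /=.
ring.
Qed.

End GenFun.

Section Comb.

Definition nz (s : seq nat) := [seq x <- s | x != 0%N].

Lemma geq_tot : total geq.
Proof. by move=> x y; rewrite /= leq_total. Qed.

Lemma sumn_nz s : sumn (nz s) = sumn s.
Proof. by elim: s => //= x s IH; case: eqP => [->|_] /=; rewrite IH. Qed.

Lemma all_nz s : all (fun x => x != 0%N) (nz s).
Proof. by apply/allP => x; rewrite mem_filter => /andP[]. Qed.

Lemma sorted_geq_split s : sorted geq s -> s = nz s ++ nseq (size s - size (nz s)) 0%N.
Proof.
elim: s => //= x s IH hs.
have hs' : sorted geq s by apply: path_sorted hs.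
case: eqP => [x0|xn0] /=.
  subst x.
  have : all (geq 0%N) s by apply: order_path_min hs => // u v w /= h1 h2; apply: leq_trans h2 h1.
  have -> : all (geq 0%N) s = all (pred1 0%N) s by apply: eq_all => y /=; rewrite leqn0.
  move/all_pred1P => hs0; rewrite hs0 /=.
  have -> : nz (nseq (size s) 0%N) = [::] by elim: (size s).
  by rewrite /= size_nseq.
by rewrite {1}(IH hs') subSS.
Qed.

Lemma size_le_sumn s : all (fun x => x != 0%N) s -> (size s <= sumn s)%N.
Proof.
elim: s => //= x s IH /andP[hx hs]; rewrite -add1n leq_add ?IH //.
by rewrite lt0n.
Qed.

Lemma nth_le_sumn s i : (nth 0%N s i <= sumn s)%N.
Proof.
elim: s i => [|x s IH] [|i] //=; first by rewrite leq_addr.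
by apply: leq_trans (IH i) _; rewrite leq_addl.
Qed.

Lemma sorted_pad s k : sorted geq s -> sorted geq (s ++ nseq k 0%N).
Proof.
have tr : transitive geq by move=> u v w /= h1 h2; apply: leq_trans h2 h1.
rewrite !(sorted_pairwise tr) pairwise_cat => -> /=.
apply/andP; split.
  by apply/allrelP => x y _ /nseqP[-> _].
by elim: k => //= k ->; rewrite andbT; apply/allP => y /nseqP[-> _]; exact: leqnn.
Qed.

Lemma nz_pad s k : all (fun x => x != 0%N) s -> nz (s ++ nseq k 0%N) = s.
Proof.
move=> hs; rewrite /nz filter_cat (all_filterP hs).
have -> : [seq x <- nseq k 0%N | x != 0%N] = [::] by elim: k.
by rewrite cats0.
Qed.

Lemma mkseq_pad s n : (size s <= n)%N -> mkseq (nth 0%N s) n = s ++ nseq (n - size s) 0%N.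
Proof.
move=> hs; apply: (@eq_from_nth _ 0%N).
  by rewrite size_mkseq size_cat size_nseq subnKC.
move=> i; rewrite size_mkseq => hi; rewrite nth_mkseq // nth_cat.
case: ltnP => // hi'; rewrite nth_nseq nth_default //.
by case: ifP.
Qed.

End Comb.

Section Count.
Variable K : numFieldType.

Lemma sum_indic (I : finType) (P : pred I) (j : I) :
  \sum_(i | P i) ((i == j)%:R : K) = (P j)%:R.
Proof.
rewrite big_mkcond (bigD1 j) //= eqxx big1 ?addr0.
  by case: (P j).
by move=> i /negbTE ->; case: (P i).
Qed.

Lemma count_t n (L : seq nat) : sorted geq L -> all (fun x => x != 0%N) L ->
  \sum_(t : n.-tuple 'I_n.+1 | sorted geq (map val t) && (sumn (map val t) == n))
     ((L == nz (map val t))%:R : K) = (sumn L == n)%:R.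
Proof.
move=> hs hnz; case: (eqVneq (sumn L) n) => hn; last first.
  rewrite big1 // => t /andP[_ /eqP ht]; case: eqP => // hL.
  by move: hn; rewrite hL sumn_nz ht eqxx.
pose t0 : n.-tuple 'I_n.+1 := [tuple inord (nth 0%N L i) | i < n].
have hsz : (size L <= n)%N by rewrite -hn size_le_sumn.
have ht0 : map val t0 = L ++ nseq (n - size L) 0%N.
  rewrite -mkseq_pad //; apply: (@eq_from_nth _ 0%N).
    by rewrite size_map size_tuple size_mkseq.
  move=> i; rewrite size_map size_tuple => hi.
  rewrite (nth_map ord0) ?size_tuple //.
  have := nth_mktuple (fun i : 'I_n => inord (nth 0%N L i) : 'I_n.+1) ord0 (Ordinal hi).
  rewrite /= => ->; rewrite nth_mkseq // inordK // ltnS -hn; exact: nth_le_sumn.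
have key : forall t : n.-tuple 'I_n.+1,
   (sorted geq (map val t) && (sumn (map val t) == n)) && (L == nz (map val t)) = (t == t0).
  move=> t; apply/idP/eqP => [/andP[/andP[ht _] /eqP hL]|->].
    apply/val_inj/(inj_map val_inj) => /=.
    rewrite ht0 (sorted_geq_split ht) -hL size_map size_tuple //.
  rewrite ht0 sorted_pad // sumn_cat nz_pad // hn eqxx /=.
  by rewrite sumn_nseq mul0n addn0 eqxx.
rewrite big_mkcond /= (eq_bigr (fun t => (t == t0)%:R)) => [|t _]; last first.
  by rewrite -key; case: (sorted _ _ && _); case: (L == _).
by rewrite (sum_indic xpredT t0).
Qed.

End Count.

Section Coef.
Variable K : numFieldType.

Definition snz m (al : 'X_{1..m}) := sort geq (nz (tval (multinom_val al))).

Lemma sumn_multinom m (al : 'X_{1..m}) : sumn (tval (multinom_val al)) = mdeg al.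
Proof. by rewrite /mdeg sumnE. Qed.

Lemma sumn_snz m (al : 'X_{1..m}) : sumn (snz al) = mdeg al.
Proof.
have hp : perm_eq (snz al) (nz (tval (multinom_val al))) by rewrite /snz perm_sort perm_refl.
by rewrite (perm_sumn hp) sumn_nz sumn_multinom.
Qed.

Lemma mcoeff_mono l m (al : 'X_{1..m}) : (@mono K l m)@_al = (snz al == l)%:R.
Proof.
rewrite /mono raddf_sum /=.
under eq_bigr do rewrite mcoeffX.
case: (ltnP (mdeg al) (sumn l).+1) => h.
  pose al0 : 'X_{1..m < (sumn l).+1} := BMultinom h.
  rewrite (eq_bigr (fun b => (b == al0)%:R)) => [|b _]; last first.
    by rewrite bmeqP.
  by rewrite (@sum_indic K _ (fun b : 'X_{1..m < (sumn l).+1} => snz b == l) al0).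
rewrite big1 => [|b _].
  case: eqP => // hl; have := sumn_snz al; rewrite hl => hd.
  by move: h; rewrite -hd ltnn.
case: eqP => // eb; have := bmdeg b; rewrite eb => h'.
by have := leq_trans h' h; rewrite ltnn.
Qed.

Lemma big_snz (R : Type) (idx : R) (op : Monoid.com_law idx) m (al : 'X_{1..m})
  (f : nat -> R) : f 0%N = idx ->
  \big[op/idx]_(x <- snz al) f x = \big[op/idx]_(i < m) f (al i).
Proof.
move=> f0.
have hp : perm_eq (snz al) (nz (tval (multinom_val al))) by rewrite /snz perm_sort perm_refl.
rewrite (perm_big _ hp) /nz big_filter big_mkcond /= big_tuple.
apply: eq_bigr => i _; have -> : al i = tnth al i by [].
by case: eqP => [->|]; rewrite ?f0.
Qed.

Variable a : nat -> K.
Hypothesis ha0 : a 0%N = 1.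

Definition kap n m (al : 'X_{1..m}) : K :=
  n`!%:R / (\prod_(i < m) (al i)`!)%:R * \prod_(i < m) a (al i).

Lemma coef_binom n m (al : 'X_{1..m}) :
  (binom_seq a n m)@_al = (mdeg al == n)%:R * kap n al.
Proof.
rewrite /binom_seq raddf_sum /=.
under eq_bigr => t _ do rewrite mcoeffZ mcoeff_mono.
pose kp (l : seq nat) : K := n`!%:R / (\prod_(x <- l) x`!)%:R * \prod_(x <- l) a x.
rewrite (eq_bigr (fun t : n.-tuple 'I_n.+1 => kp (snz al) * (snz al == nz (map val t))%:R)); last first.
  move=> t _; rewrite /nz; case: eqP => [h|_]; last by rewrite !mulr0.
  by rewrite -h.
rewrite -mulr_sumr count_t; first last.
- by rewrite /snz all_sort all_nz.
- by rewrite /snz sort_sorted //; apply: geq_tot.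
rewrite sumn_snz mulrC; congr (_ * _); rewrite /kp /kap.
rewrite (@big_snz _ _ _ _ al factorial) //.
by rewrite (@big_snz _ _ _ _ al a).
Qed.

End Coef.

Section EvalForm.
Variable K : numFieldType.
Variable a : nat -> K.
Hypothesis ha0 : a 0%N = 1.

Lemma msize_binom n m : (msize (binom_seq a n m) <= n.+1)%N.
Proof.
rewrite msizeE; apply/bigmax_leqP_seq => al hal _.
move: hal; rewrite mcoeff_msupp (coef_binom ha0).
by case: (eqVneq (mdeg al) n) => [-> //|h]; rewrite mul0r eqxx.
Qed.

Lemma E_expand m n (u : nat -> K) : E a m n u =
  \sum_(f : {ffun 'I_m -> 'I_n.+1} | (\sum_i (f i : nat) == n)%N)
     n`!%:R * \prod_i (a (f i) / (f i)`!%:R * u i ^+ f i).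
Proof.
rewrite /E /Fp.
under eq_bigr do rewrite poly_def.
rewrite bigA_distr_bigA /= coef_sum mulr_sumr [RHS]big_mkcond /=; apply: eq_bigr => f _.
rewrite (eq_bigr (fun i => (a (f i) / (f i)`!%:R * u i ^+ f i)%:P * 'X^(f i))); last first.
  by move=> i _; rewrite mul_polyC.
rewrite big_split /= -rmorph_prod prodrXr coefCM coefXn eq_sym.
by case: eqP => _; rewrite ?mulr1 ?mulr0.
Qed.

Lemma mnm_le_mdeg m (al : 'X_{1..m}) i : (al i <= mdeg al)%N.
Proof. by rewrite mdegE (bigD1 i) //= leq_addr. Qed.

Lemma meval_binom n m (u : nat -> K) :
  (binom_seq a n m).@[fun i : 'I_m => u i] = E a m n u.
Proof.
rewrite E_expand (mpolywE (msize_binom n m)) raddf_sum /=.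
under eq_bigr do rewrite mevalZ mevalX (coef_binom ha0).
rewrite (eq_bigr (fun al : 'X_{1..m < n.+1} => if mdeg al == n then kap a n al * \prod_(i < m) u i ^+ al i else 0)); last first.
  by move=> al _; case: eqP; rewrite ?mul1r ?mul0r.
rewrite -big_mkcond /=.
pose h (al : 'X_{1..m < n.+1}) : {ffun 'I_m -> 'I_n.+1} := [ffun i => inord (al i)].
pose h' (f : {ffun 'I_m -> 'I_n.+1}) : 'X_{1..m < n.+1} := insubd bm0 [multinom (f i : nat) | i < m].
have hle : forall (al : 'X_{1..m < n.+1}) i, (al i < n.+1)%N.
  by move=> al i; apply: leq_ltn_trans (mnm_le_mdeg al i) (bmdeg al).
have hval : forall al i, (h al i : nat) = al i by move=> al i; rewrite ffunE inordK.
rewrite [RHS](reindex_onto h h'); last first.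
  move=> f hf; apply/ffunP => i; rewrite ffunE; apply/val_inj => /=.
  have hh' : bmnm (h' f) = [multinom (f i : nat) | i < m].
    rewrite /h' val_insubd mdegE.
    under eq_bigr do rewrite mnmE.
    by rewrite (eqP hf) ltnSn.
  by rewrite hh' mnmE inordK.
have hhal : forall al, h' (h al) = al.
  move=> al; apply/val_inj; rewrite /h' val_insubd.
  have -> : [multinom (h al i : nat) | i < m] = bmnm al.
    by apply/mnmP => i; rewrite mnmE hval.
  by rewrite bmdeg.
apply: eq_big => [al|al _].
  rewrite hhal eqxx andbT mdegE; congr (_ == _); apply: eq_bigr => i _; by rewrite hval.
have -> : \prod_(i < m) (a (h al i) / (h al i)`!%:R * u i ^+ h al i) =
    \prod_(i < m) (a (al i) / (al i)`!%:R * u i ^+ al i) by apply: eq_bigr => i _; rewrite hval.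
rewrite /kap !big_split /= prodfV natr_prod.
ring.
Qed.

End EvalForm.

Section SymPart.
Variable K : numFieldType.
Variable a : nat -> K.
Hypothesis ha0 : a 0%N = 1.

Definition ev (F : SF K) m (w : nat -> K) : K := (F m).@[fun i : 'I_m => w i].

Lemma ev_ext F m w w' : (forall i, (i < m)%N -> w i = w' i) -> ev F m w = ev F m w'.
Proof. by move=> h; apply: meval_eq => i; apply: h; apply: ltn_ord. Qed.

Definition sv m (v : 'I_m -> K) (j : nat) : K := if insub j is Some i then v i else 0.

Lemma svE m (v : 'I_m -> K) (i : 'I_m) : sv v i = v i.
Proof. by rewrite /sv; case: insubP => [j _ hj|]; [congr v; apply/val_inj | rewrite ltn_ord]. Qed.

Lemma meval_sv m (v : 'I_m -> K) (p : {mpoly K[m]}) : p.@[v] = p.@[fun i : 'I_m => sv v i].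
Proof. by apply: meval_eq => i; rewrite svE. Qed.

Lemma sf_eq_ev (F G : SF K) : (forall m w, ev F m w = ev G m w) -> F = G.
Proof.
move=> h; apply: functional_extensionality_dep => m.
by apply: mpoly_eval_eq => v; rewrite !(meval_sv v); apply: h.
Qed.

Lemma var_or0_eval m k (w : nat -> K) :
  (@var_or0 K m k).@[fun i : 'I_m => w i] = if (k < m)%N then w k else 0.
Proof.
rewrite /var_or0; case: insubP => [j hk hj|hk] /=.
  by rewrite mevalXU hj hk.
by rewrite meval0 (negbTE hk).
Qed.

Lemma ev_shift x G n w :
  ev (shift x G) n w = ev G n.+1 (fun i => if i is j.+1 then w j else x).
Proof.
rewrite /ev /shift comp_mpoly_meval; apply: meval_eq => i; rewrite tnth_mktuple.
case: i => [[|i] hi] /=; first by rewrite mevalC.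
by rewrite var_or0_eval -ltnS hi.
Qed.

Lemma eps_ev G w : eps G = ev G 0 w.
Proof. by rewrite /ev /eps {2}(mpoly0_const (G 0%N)) mevalC. Qed.

Lemma binom_sym n m : binom_seq a n m \is symmetric.
Proof.
apply/issymP => s; apply/mpolyP => al; rewrite mcoeff_sym !(coef_binom ha0) mdeg_mperm.
congr (_ * _); rewrite /kap.
have e1 : \prod_(i < m) ([multinom al (s i) | i < m] i)`! = \prod_(i < m) (al i)`!.
  rewrite [RHS](reindex_inj (@perm_inj _ s)); apply: eq_bigr => i _; by rewrite mnmE.
have e2 : \prod_(i < m) a ([multinom al (s i) | i < m] i) = \prod_(i < m) a (al i).
  rewrite [RHS](reindex_inj (@perm_inj _ s)); apply: eq_bigr => i _; by rewrite mnmE.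
by rewrite e1 e2.
Qed.

Lemma binom_restr n m : restr (binom_seq a n m.+1) = binom_seq a n m.
Proof.
apply: mpoly_eval_eq => v; rewrite (meval_sv v) [RHS](meval_sv v).
rewrite (meval_binom ha0 n m (sv v)) /restr comp_mpoly_meval.
have -> : (fun i : 'I_m.+1 => (tnth [tuple @var_or0 K m (val i) | i < m.+1] i).@[fun i => sv v i])
   = (fun i : 'I_m.+1 => (fun j => if (j < m)%N then sv v j else 0) i).
  by apply: functional_extensionality => i; rewrite tnth_mktuple var_or0_eval.
by rewrite (meval_binom ha0 n m.+1 (fun j => if (j < m)%N then sv v j else 0)) (@E_restr K a ha0 m n (sv v)) // ?ltnn // => i ->.
Qed.

Lemma isSym_binom n : isSym (binom_seq a n).
Proof.
split => [m|m|]; [exact: binom_sym | exact: binom_restr |].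
by exists n.+1 => m; apply: msize_binom.
Qed.

End SymPart.

Section Closure.
Variable K : numFieldType.

Lemma isSym_add (F G : SF K) : isSym F -> isSym G -> isSym (sf_add F G).
Proof.
case=> s1 r1 [d1 b1] [s2 r2 [d2 b2]]; split => [n|n|].
- by rewrite /sf_add; apply: rpredD; [apply: s1 | apply: s2].
- by rewrite /sf_add /restr comp_mpolyD -/(restr _) -/(restr _) r1 r2.
exists (maxn d1 d2) => n; apply: leq_trans (msizeD_le _ _) _.
by rewrite geq_max !leq_max b1 b2 orbT.
Qed.

Lemma isSym_scale c (F : SF K) : isSym F -> isSym (sf_scale c F).
Proof.
case=> s1 r1 [d1 b1]; split => [n|n|].
- by rewrite /sf_scale; apply: rpredZ; apply: s1.
- by rewrite /sf_scale /restr comp_mpolyZ -/(restr _) r1.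
by exists d1 => n; apply: leq_trans (msizeZ_le _ _) _.
Qed.

Variable a : nat -> K.
Hypothesis ha0 : a 0%N = 1.

Definition lc (c : nat -> K) (g : nat -> nat) N : SF K :=
  fun m => \sum_(j < N) c j *: binom_seq a (g j) m.

Lemma lc_S c g N : lc c g N.+1 = sf_add (lc c g N) (sf_scale (c N) (binom_seq a (g N))).
Proof. by apply: functional_extensionality_dep => m; rewrite /lc big_ord_recr. Qed.

Lemma lc_0 c g : lc c g 0 = sf_scale 0 (binom_seq a 0).
Proof. by apply: functional_extensionality_dep => m; rewrite /lc big_ord0 /sf_scale scale0r. Qed.

Lemma isSym_lc c g N : isSym (lc c g N).
Proof.
elim: N => [|N IH]; first by rewrite lc_0; apply/isSym_scale/isSym_binom.
by rewrite lc_S; apply: isSym_add => //; apply/isSym_scale/isSym_binom.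
Qed.

Fixpoint Sm (u : nat -> K) (k : nat) (F : SF K) : SF K :=
  match k with 0 => F | k'.+1 => shift (u k') (Sm u k' F) end.

Definition app k (u w : nat -> K) (i : nat) : K := if (i < k)%N then u i else w (i - k)%N.

Lemma ev_Sm u k F n w : ev (Sm u k F) n w = ev F (k + n) (app k u w).
Proof.
elim: k n w => [|k IH] n w /=.
  by apply: ev_ext => i _; rewrite /app subn0.
rewrite ev_shift IH addSnnS; apply: ev_ext => i _; rewrite /app.
case: (ltngtP i k) => h.
- by rewrite ltnS ltnW.
- by rewrite ltnS leqNgt h /= -(subnSK h).
by rewrite h subnn ltnSn.
Qed.

Lemma Sm_binom u k n : Sm u k (binom_seq a n) =
  lc (fun j => 'C(n, j)%:R * E a k j u) (fun j => n - j)%N n.+1.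
Proof.
apply: sf_eq_ev => m w; rewrite ev_Sm /ev (meval_binom ha0) /lc raddf_sum /=.
rewrite E_split; apply: eq_bigr => j _; rewrite mevalZ (meval_binom ha0).
rewrite (@E_ext K a k j (app k u w) u); last first.
  by move=> i hi; rewrite /app hi.
rewrite (@E_ext K a m (n - j)%N (fun i => app k u w (k + i)%N) w) //.
by move=> i hi; rewrite /app ltnNge leq_addr /= addKn.
Qed.

End Closure.

Theorem mainTheorem12 (R : realType) (a : nat -> R[i])
    (theta : SF R[i] -> SF R[i])
    (ha0 : a 0%N = 1) (ha1 : a 1%N != 0)
    (hmaps : forall F, isSym F -> isSym (theta F))
    (hadd : forall F G, isSym F -> isSym G ->
              theta (sf_add F G) = sf_add (theta F) (theta G))
    (hscale : forall (c : R[i]) F, isSym F ->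
              theta (sf_scale c F) = sf_scale c (theta F))
    (hshift : forall (x : R[i]) F, isSym F ->
              theta (shift x F) = shift x (theta F)) :
  forall n : nat,
    theta (binom_seq a n) =
    (fun m => \sum_(k < n.+1)
                (('C(n, k))%:R * eps (theta (binom_seq a k)))
                  *: binom_seq a (n - k) m).
Proof.
move=> n.
have theta_lc : forall c g N, theta (lc a c g N) =
    fun m => \sum_(j < N) c j *: theta (binom_seq a (g j)) m.
  move=> c g; elim => [|N IH].
    rewrite lc_0 hscale; last exact (isSym_binom ha0 0).
    by apply: functional_extensionality_dep => m; rewrite /sf_scale scale0r big_ord0.
  rewrite lc_S hadd; last first.
  - by apply: isSym_scale; exact (isSym_binom ha0 _).
  - exact: isSym_lc.
  rewrite hscale; last exact (isSym_binom ha0 _).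
  rewrite IH.
  by apply: functional_extensionality_dep => m; rewrite /sf_add /sf_scale big_ord_recr.
have comm : forall u k, theta (Sm u k (binom_seq a n)) = Sm u k (theta (binom_seq a n)).
  move=> u; elim => [|k IH] //=.
  by rewrite hshift ?IH // (Sm_binom ha0); apply: isSym_lc.
apply: sf_eq_ev => m w.
have e1 : ev (theta (binom_seq a n)) m w = eps (Sm w m (theta (binom_seq a n))).
  rewrite (eps_ev _ (fun _ => 0)) ev_Sm addn0; apply: ev_ext => i hi; by rewrite /app hi.
rewrite e1 -comm (Sm_binom ha0) theta_lc /eps raddf_sum /=.
rewrite /ev raddf_sum /=.
under eq_bigr do rewrite mcoeffZ.
under [RHS]eq_bigr do rewrite mevalZ (meval_binom ha0).
rewrite [RHS](reindex_inj rev_ord_inj) /=; apply: eq_bigr => j _.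
rewrite subSS subKn -1?ltnS // bin_sub -1?ltnS //.
ring.
Qed.
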